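(* Let $\mathcal{F}$ be an argumentation framework and $S\subseteq A_{\mathcal{F}}$. If $\beta$ is an ordinal with $\beta>\alpha_S(a)$ for every $a\in A_{\mathcal{F}}$, then $\Delta_{\mathcal{F},S}=\Delta^\beta_{\mathcal{F},S}$.
   Context: An argumentation framework is $\mathcal{F}=(A_{\mathcal{F}},R_{\mathcal{F}})$ with $R_{\mathcal{F}}\subseteq A_{\mathcal{F}}\times A_{\mathcal{F}}$; $a\rightarrow b$ means $(a,b)\in R_{\mathcal{F}}$. $\mathcal{F}|_B=(A_{\mathcal{F}}\cap B,R_{\mathcal{F}}\cap(B\times B))$. $\mathrm{SCC}(a)$ is the set of $b$ with directed attack paths (possibly of length 0) from $a$ to $b$ and back. $D_S(X)=\{b\in X:\exists a\in S\setminus X,\ a\rightarrow b\}$. $C^0_S(a)=\mathrm{SCC}(a)$; $C^{\alpha+1}_S(a)$ = the strongly connected component of $a$ in $\mathcal{F}|_{C^\alpha_S(a)\setminus D_S(C^\alpha_S(a))}$ (empty if $a$ is not in that set); for limit $\lambda$, $C^\lambda_S(a)$ = the component of $a$ in $\mathcal{F}|_{\bigcap_{\alpha<\lambda}C^\alpha_S(a)}$. $\alpha_S(a)$ is the least ordinal $\alpha$ such that $a\notin C^\alpha_S(a)$ or $C^{\alpha+1}_S(a)=C^\alpha_S(a)$. $a\Rightarrow^B_{\mathcal{F}}b$ means there is a directed attack path from $a$ to $b$ in $\mathcal{F}|_B$. For $D\subseteq A_{\mathcal{F}}$, $\Delta_{\mathcal{F},S}(D)=\{a\in A_{\mathcal{F}}:\exists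 b\in S\,(b\rightarrow a\text{ and not }a\Rightarrow^{A_{\mathcal{F}}\setminus D}_{\mathcal{F}}b)\}$; this operator on subsets of $A_{\mathcal{F}}$ is monotone and $\Delta_{\mathcal{F},S}$ (as a set) denotes its least fixed point. Iterates: $\Delta^0_{\mathcal{F},S}=\emptyset$, $\Delta^{\alpha+1}_{\mathcal{F},S}=\Delta_{\mathcal{F},S}(\Delta^\alpha_{\mathcal{F},S})$, $\Delta^\lambda_{\mathcal{F},S}=\bigcup_{\alpha<\lambda}\Delta^\alpha_{\mathcal{F},S}$ for limit $\lambda$. *)

(* Defs.v *)
(* argumentation frameworks may be infinite; sets are predicates. *)
From Stdlib Require Import Classical ClassicalEpsilon Relation_Operators Wellfounded.

Set Implicit Arguments.

Definition aset (A : Type) := A -> Prop.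

Definition set_eq {A} (X Y : aset A) : Prop := forall x, X x <-> Y x.
Definition subset {A} (X Y : aset A) : Prop := forall x, X x -> Y x.

Record AF := MkAF {
  arg : Type;
  att : arg -> arg -> Prop   (* att a b  <->  a -> b *)
}.

Definition reach (F : AF) (B : aset (arg F)) (a b : arg F) : Prop :=
  B a /\ B b /\
  clos_refl_trans _ (fun x y => B x /\ B y /\ att F x y) a b.

(** Strongly connected component of a in F|_B (empty if a is not in B). *)
Definition comp (F : AF) (B : aset (arg F)) (a : arg F) : aset (arg F) :=
  fun b => reach F B a b /\ reach F B b a.

Definition SCC (F : AF) (a : arg F) : aset (arg F) :=
  comp F (fun _ => True) a.

Definition DS (F : AF) (S X : aset (arg F)) : aset (arg F) :=
  fun b => X b /\ exists a, S a /\ ~ X a /\ att F a b.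

(** Ordinals: an ordinal is represented as an element of a well-ordered type
    (strict, total, well-founded order). *)
Record wellorder := WellOrder {
  wo_car :> Type;
  wo_lt : wo_car -> wo_car -> Prop;
  wo_trans : forall x y z, wo_lt x y -> wo_lt y z -> wo_lt x z;
  wo_irrefl : forall x, ~ wo_lt x x;
  wo_total : forall x y, wo_lt x y \/ x = y \/ wo_lt y x;
  wo_wf : well_founded wo_lt
}.

(** [y] is the immediate predecessor of [x] (i.e. x = y + 1). *)
Definition ipred (W : wellorder) (y x : W) : Prop :=
  wo_lt W y x /\ ~ (exists z, wo_lt W y z /\ wo_lt W z x).

Lemma ipred_lt (W : wellorder) (y x : W) : ipred W y x -> wo_lt W y x.
Proof. intros [H _]; exact H. Qed.

(** Transfinite iteration of set-valued sequences:
    value at 0 is [base]; at a successor y+1 it is [sc] (value at y);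
    at a limit x it is [lim] applied to the family of earlier values. *)
Definition titer (A : Type) (W : wellorder) (base : aset A)
  (sc : aset A -> aset A)
  (lim : forall x : W, ({y : W | wo_lt W y x} -> aset A) -> aset A) : W -> aset A :=
  Fix (wo_wf W) (fun _ => aset A)
    (fun x rec =>
       match excluded_middle_informative (exists y, wo_lt W y x) with
       | right _ => base
       | left _ =>
         match excluded_middle_informative (exists y, ipred W y x) with
         | left h =>
             let y := proj1_sig (constructive_indefinite_description _ h) in
             let hy := proj2_sig (constructive_indefinite_description _ h) in
             sc (rec y (ipred_lt hy))
         | right _ => lim x (fun p => rec (proj1_sig p) (proj2_sig p))
         end
       end).

Definition Cstep (F : AF) (S : aset (arg F)) (a : arg F) (X : aset (arg F))
  : aset (arg F) :=
  comp F (fun b => X b /\ ~ DS F S X b) a.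

Definition Citer (F : AF) (S : aset (arg F)) (a : arg F) (W : wellorder)
  : W -> aset (arg F) :=
  titer W (SCC F a) (Cstep F S a)
    (fun x f => comp F (fun b => forall p, f p b) a).

Definition alpha_stop (F : AF) (S : aset (arg F)) (a : arg F) (W : wellorder)
  (al : W) : Prop :=
  ~ Citer F S a W al a \/ set_eq (Cstep F S a (Citer F S a W al)) (Citer F S a W al).

Definition is_alphaS (F : AF) (S : aset (arg F)) (a : arg F) (W : wellorder)
  (al : W) : Prop :=
  alpha_stop F S a W al /\ forall g, alpha_stop F S a W g -> ~ wo_lt W g al.

Definition DeltaOp (F : AF) (S : aset (arg F)) (D : aset (arg F)) : aset (arg F) :=
  fun a => exists b, S b /\ att F b a /\ ~ reach F (fun x => ~ D x) a b.

Definition DeltaIter (F : AF) (S : aset (arg F)) (W : wellorder) : W -> aset (arg F) :=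
  titer W (fun _ => False) (DeltaOp F S)
    (fun x f => fun z => exists p, f p z).

Definition is_lfp (A : Type) (Op : aset A -> aset A) (D : aset A) : Prop :=
  set_eq (Op D) D /\ forall E, set_eq (Op E) E -> subset D E.

(* Main.v *)
Require Import Defs.
From Stdlib Require Import Classical ClassicalEpsilon Relation_Operators Wellfounded FunctionalExtensionality Operators_Properties.

Lemma titer_cases (A : Type) (W : wellorder) (base : aset A) (sc : aset A -> aset A)
  (lim : forall x : W, ({y : W | wo_lt W y x} -> aset A) -> aset A) (x : W) :
  ((~ exists y, wo_lt W y x) /\ titer W base sc lim x = base) \/
  (exists y, ipred W y x /\ titer W base sc lim x = sc (titer W base sc lim y)) \/
  ((exists y, wo_lt W y x) /\ (~ exists y, ipred W y x) /\
    titer W base sc lim x = lim x (fun p => titer W base sc lim (proj1_sig p))).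
Proof.
  unfold titer. rewrite Fix_eq.
  - destruct (excluded_middle_informative (exists y, wo_lt W y x)) as [h1|h1].
    + destruct (excluded_middle_informative (exists y, ipred W y x)) as [h2|h2].
      * right; left. exists (proj1_sig (constructive_indefinite_description _ h2)).
        split. apply (proj2_sig (constructive_indefinite_description _ h2)). reflexivity.
      * right; right. auto.
    + left. auto.
  - intros x0 f g Hfg. destruct excluded_middle_informative; [|reflexivity].
    destruct excluded_middle_informative. rewrite Hfg; reflexivity.
    f_equal. apply functional_extensionality; intros p. apply Hfg.
Qed.

Section S.
Variable F : AF.

Definition stp (B : aset (arg F)) x y := B x /\ B y /\ att F x y.

Lemma rt_B (B : aset (arg F)) x y : clos_refl_trans _ (stp B) x y -> B x -> B y.
Proof. induction 1; unfold stp in *; intuition. Qed.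

Lemma rt_mono (B B' : aset (arg F)) x y : subset B B' ->
  clos_refl_trans _ (stp B) x y -> clos_refl_trans _ (stp B') x y.
Proof. intros H; induction 1. apply rt_step. unfold stp in *; intuition.
  apply rt_refl. eapply rt_trans; eauto. Qed.

Lemma reach_mono (B B' : aset (arg F)) x y : subset B B' -> reach F B x y -> reach F B' x y.
Proof. intros H [h1 [h2 h3]]. repeat split; auto. eapply rt_mono; eauto. Qed.

Lemma reach_trans B x y z : reach F B x y -> reach F B y z -> reach F B x z.
Proof. intros [h1 [h2 h3]] [h4 [h5 h6]]. repeat split; auto. eapply rt_trans; eauto. Qed.

Lemma reach_att (B : aset (arg F)) x y : B x -> B y -> att F x y -> reach F B x y.
Proof. intros. repeat split; auto. apply rt_step. unfold stp; auto. Qed.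

Lemma comp_B B a c : comp F B a c -> B c.
Proof. intros [[_ [h _]] _]; exact h. Qed.

Lemma comp_mono B B' a : subset B B' -> subset (comp F B a) (comp F B' a).
Proof. intros H c [h1 h2]. split; eapply reach_mono; eauto. Qed.

Lemma rt_restrict (B B' : aset (arg F)) x y :
  clos_refl_trans _ (stp B) x y ->
  (forall z, clos_refl_trans _ (stp B) x z -> clos_refl_trans _ (stp B) z y -> B' z) ->
  clos_refl_trans _ (stp B') x y.
Proof.
  intros H. apply clos_rt_rt1n in H. induction H; intros Hz.
  - apply rt_refl.
  - eapply rt_trans; [apply rt_step | apply IHclos_refl_trans_1n].
    + destruct H as [b1 [b2 b3]]. split; [|split]; auto.
      apply Hz. apply rt_refl. apply rt_trans with y. apply rt_step; split; auto.
      apply clos_rt1n_rt; auto.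
      apply Hz. apply rt_step; split; auto. apply clos_rt1n_rt; auto.
    + intros w h1 h2. apply Hz; auto. apply rt_trans with y; auto. apply rt_step; auto.
Qed.

Lemma comp_restrict (B1 B2 : aset (arg F)) a :
  subset B1 B2 -> subset (comp F B2 a) B1 -> set_eq (comp F B1 a) (comp F B2 a).
Proof.
  intros H1 H2 c. split. apply comp_mono; auto.
  intros [[a1 [a2 a3]] [b1 [b2 b3]]].
  assert (Hin : forall z, clos_refl_trans _ (stp B2) a z -> clos_refl_trans _ (stp B2) z a -> B1 z).
  { intros z h1 h2. apply H2. assert (B2 z) by (eapply rt_B; eauto).
    split; repeat split; auto. }
  assert (Ha : B1 a) by (apply Hin; apply rt_refl).
  assert (Hc : B1 c) by (apply Hin; auto).
  split; repeat split; auto.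
  - apply rt_restrict with B2; auto. intros z h1 h2. apply Hin; auto. eapply rt_trans; eauto.
  - apply rt_restrict with B2; auto. intros z h1 h2. apply Hin; auto. eapply rt_trans; eauto.
Qed.

Variable S : aset (arg F).

Lemma op_mono D D' : subset D D' -> subset (DeltaOp F S D) (DeltaOp F S D').
Proof.
  intros H x [b [h1 [h2 h3]]]. exists b; repeat split; auto.
  intro R; apply h3. eapply reach_mono; [|exact R]. intros z hz hd; apply hz, H, hd.
Qed.

Variable W : wellorder.
Notation Dl := (DeltaIter F S W).

Lemma ipred_cases (y x z : W) : ipred W y x -> wo_lt W z x -> z = y \/ wo_lt W z y.
Proof.
  intros [h1 h2] hz. destruct (wo_total W z y) as [h|[h|h]]; auto.
  exfalso; apply h2; eauto.
Qed.

Lemma chain : forall x : W, subset (Dl x) (DeltaOp F S (Dl x)) /\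
  forall y, wo_lt W y x -> subset (Dl y) (Dl x).
Proof.
  intro x. induction x as [x IH] using (well_founded_ind (wo_wf W)).
  destruct (titer_cases _ W (fun _ => False) (DeltaOp F S) (fun x f => fun z => exists p, f p z) x)
    as [[h1 h2]|[[y [hy h2]]|[h1 [h2 h3]]]]; unfold DeltaIter; rewrite ?h2, ?h3.
  - split. intros z []. intros y hy; exfalso; eauto.
  - fold (Dl y). assert (Hs : forall y', wo_lt W y' x -> subset (Dl y') (DeltaOp F S (Dl y))).
    { intros y' hy'. destruct (ipred_cases _ _ _ hy hy') as [->|hl].
      apply (IH y (ipred_lt hy)).
      intros z hz. apply (IH y (ipred_lt hy)). apply (IH y (ipred_lt hy)) with y'; auto. }
    split; auto. apply op_mono. apply (IH y (ipred_lt hy)).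
  - split.
    + intros z [p hp]. destruct p as [y hy]. simpl in hp.
      apply (op_mono (Dl y)). intros w hw. exists (exist _ y hy); exact hw.
      apply (IH y hy); exact hp.
    + intros y hy z hz. exists (exist _ y hy). exact hz.
Qed.

Lemma ipred_uniq (y y' x : W) : ipred W y x -> ipred W y' x -> y = y'.
Proof.
  intros h h'. destruct (ipred_cases _ _ _ h (ipred_lt h')) as [->|hl]; auto.
  exfalso. destruct h' as [h1 h2]. apply h2. exists y; split; auto. apply h.
Qed.

Lemma ord_cases (x : W) : (~ exists y, wo_lt W y x) \/ (exists y, ipred W y x) \/
  ((exists y, wo_lt W y x) /\ ~ exists y, ipred W y x).
Proof. destruct (classic (exists y, wo_lt W y x)); destruct (classic (exists y, ipred W y x)); tauto. Qed.

Section T.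
Variable A : Type.
Variable base : aset A.
Variable sc : aset A -> aset A.
Variable lim : forall x : W, ({y : W | wo_lt W y x} -> aset A) -> aset A.
Notation T := (titer W base sc lim).

Lemma titer_0 x : (~ exists y, wo_lt W y x) -> T x = base.
Proof. intro H. destruct (titer_cases _ W base sc lim x) as [[_ e]|[[y [hy e]]|[h _]]]; auto.
  exfalso; apply H; exists y; apply hy. tauto. Qed.

Lemma titer_S x y : ipred W y x -> T x = sc (T y).
Proof. intro H. destruct (titer_cases _ W base sc lim x) as [[h e]|[[y' [hy e]]|[h [h' e]]]].
  exfalso; apply h; exists y; apply H. rewrite (ipred_uniq _ _ _ H hy); auto.
  exfalso; apply h'; eauto. Qed.

Lemma titer_L x : (exists y, wo_lt W y x) -> (~ exists y, ipred W y x) ->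
  T x = lim x (fun p => T (proj1_sig p)).
Proof. intros H H'. destruct (titer_cases _ W base sc lim x) as [[h e]|[[y' [hy e]]|[h [h' e]]]]; auto.
  tauto. exfalso; eauto. Qed.
End T.

Lemma chain_mono (y x : W) : wo_lt W y x -> subset (Dl y) (Dl x).
Proof. intros; apply (chain x); auto. Qed.
Lemma chain_op (x : W) : subset (Dl x) (DeltaOp F S (Dl x)).
Proof. apply chain. Qed.

Variable a : arg F.
Notation Cl := (Citer F S a W).

Lemma inv : forall x : W, ~ Dl x a -> set_eq (Cl x) (comp F (fun z => ~ Dl x z) a).
Proof.
  intro x. induction x as [x IH] using (well_founded_ind (wo_wf W)).
  intro Ha.
  destruct (ord_cases x) as [h|[[y hy]|[h h']]].
  - unfold Citer in *. unfold DeltaIter in *. rewrite !titer_0 in * by auto.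
    intro c. unfold SCC. split; apply comp_mono; intros z _; auto.
  - unfold Citer in *. unfold DeltaIter in *. rewrite !(titer_S _ _ _ _ _ _ hy) in *.
    fold (Cl y) in *. fold (Dl y) in *.
    assert (Hy : ~ Dl y a) by (intro; apply Ha, chain_op; auto).
    specialize (IH y (ipred_lt hy) Hy).
    unfold Cstep. apply comp_restrict.
    + intros c [hc hd] hop. destruct hop as [b [hb [hba hr]]].
      apply hd. split; auto. exists b; repeat split; auto.
      intro hbC. apply hr. apply IH in hc. apply IH in hbC.
      eapply reach_trans. apply hc. apply hbC.
    + intros c hc.
      assert (hc' : comp F (fun z => ~ Dl y z) a c).
      { eapply comp_mono; [|exact hc]. intros z hz hd; apply hz, chain_op, hd. }
      split. apply IH; auto.
      intros [_ [b [hb [hnb hbc]]]]. apply (comp_B _ _ _ hc).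
      exists b; repeat split; auto. intro hr. apply hnb. apply IH.
      destruct hc' as [r1 r2]. split.
      eapply reach_trans; eauto.
      apply reach_trans with c; auto. apply reach_att; auto. apply hr. apply r1.
  - unfold Citer in *. unfold DeltaIter in *. rewrite !titer_L in * by auto.
    fold Cl in *. fold Dl in *.
    apply comp_restrict.
    + intros c hc [p hp]. destruct p as [y hy]. simpl in *.
      specialize (hc (exist _ y hy)). simpl in hc.
      assert (Hy : ~ Dl y a) by (intro; apply Ha; exists (exist _ y hy); auto).
      apply (IH y hy Hy) in hc. apply (comp_B _ _ _ hc). exact hp.
    + intros c hc p. destruct p as [y hy]. simpl.
      assert (Hy : ~ Dl y a) by (intro; apply Ha; exists (exist _ y hy); auto).
      apply (IH y hy Hy). eapply comp_mono; [|exact hc].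
      intros z hz hd. apply hz. exists (exist _ y hy). exact hd.
Qed.

Lemma stable_op (C : aset (arg F)) : set_eq (Cstep F S a C) C ->
  forall D, subset C (fun z => ~ D z) -> forall c, C c -> ~ DeltaOp F S D c.
Proof.
  intros HC D HD c hc [b [hb [hbc hr]]].
  pose proof (proj2 (HC c) hc) as hc'.
  destruct (classic (C b)) as [hbC|hbC].
  - apply hr. apply (proj2 (HC b)) in hbC.
    eapply reach_mono; [| eapply reach_trans; [apply hc' | apply hbC]].
    intros z [hz _]. apply HD, hz.
  - apply (comp_B _ _ _ hc'). split; auto. exists b; auto.
Qed.

Lemma all_disj (C : aset (arg F)) : set_eq (Cstep F S a C) C ->
  forall x, forall c, C c -> ~ Dl x c.
Proof.
  intros HC x. induction x as [x IH] using (well_founded_ind (wo_wf W)).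
  destruct (ord_cases x) as [h|[[y hy]|[h h']]]; unfold DeltaIter.
  - rewrite titer_0 by auto. auto.
  - rewrite (titer_S _ _ _ _ _ _ hy). fold (Dl y).
    apply stable_op; auto. intros z hz. apply (IH y (ipred_lt hy)); auto.
  - rewrite titer_L by auto. intros c hc [[y hy] hp]. simpl in hp. apply (IH y hy c hc hp).
Qed.
End S.

Theorem lemma3 (F : AF) (S : aset (arg F)) (W : wellorder) (beta : W) :
  (forall a : arg F, exists al : W, is_alphaS F S a W al /\ wo_lt W al beta) ->
  is_lfp (DeltaOp F S) (DeltaIter F S W beta).
Proof.
  intros Hal. split.
  - intro x. split; [|apply chain_op].
    intro hx. apply NNPP; intro hn.
    destruct (Hal x) as [al [[hst _] hlt]].
    assert (hna : ~ DeltaIter F S W al x) by (intro h; apply hn, (chain_mono F S W al beta hlt), h).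
    pose proof (inv F S W x al hna) as Hinv.
    assert (hxC : Citer F S x W al x).
    { apply Hinv. split; repeat split; auto; apply rt_refl. }
    destruct hst as [hst|hst]; [contradiction|].
    refine (stable_op F S x _ hst (DeltaIter F S W beta) _ x hxC hx).
    intros z hz. apply (all_disj F S W x _ hst beta z hz).
  - intros E HE. cut (forall y : W, subset (DeltaIter F S W y) E); [auto|].
    intro y. induction y as [y IH] using (well_founded_ind (wo_wf W)).
    destruct (ord_cases W y) as [h|[[z hz]|[h h']]]; unfold DeltaIter.
    + rewrite titer_0 by auto. intros _ [].
    + rewrite (titer_S _ _ _ _ _ _ _ hz). intros c hc. apply HE.
      eapply op_mono; [|exact hc]. apply (IH z (ipred_lt hz)).
    + rewrite titer_L by auto. intros c [[z hz] hp]. apply (IH z hz c hp).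
Qed.
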